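(* Let $b\in\mathbb{Z}^+$. Then $t(3,5,4b;4n+3)=t(3,5,b;n)$ for every $n\in\mathbb{Z}^+$, and for all complex $q$ with $|q|<1$, $$\sum_{n=0}^{\infty}t(3,5,4b;4n+5)q^n=8\psi(q^b)\big(\varphi(q^{10})\psi(q^{12})+q\varphi(q^6)\psi(q^{20})\big).$$
   Context: $\mathbb{Z}^+$ is the set of positive integers. For $a,b,c\in\mathbb{Z}^+$ and nonnegative integer $n$, $t(a,b,c;n)$ denotes the number of triples $(x,y,z)\in\mathbb{Z}^3$ with $n=a\frac{x(x+1)}2+b\frac{y(y+1)}2+c\frac{z(z+1)}2$. Ramanujan's theta functions are $\varphi(q)=\sum_{n=-\infty}^{\infty}q^{n^2}$ and $\psi(q)=\sum_{n=0}^{\infty}q^{n(n+1)/2}$ for $|q|<1$. *)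

(* Defs.v *)
From Stdlib Require Import Reals ZArith List Lia.
From Coquelicot Require Import Coquelicot.
Import ListNotations.

Definition tri (x : Z) : Z := (x * (x + 1) / 2)%Z.

(* Integers -n-1, ..., n.  For |x| outside this range tri x > n, so every
   solution of a*tri x + b*tri y + c*tri z = n (a,b,c >= 1) lies in it. *)
Definition zrange (n : nat) : list Z :=
  map (fun k => (Z.of_nat k - Z.of_nat n - 1)%Z) (seq 0 (2 * n + 2)).

Definition t (a b c n : nat) : nat :=
  length (filter (fun p : Z * Z * Z =>
                    let '(x, y, z) := p in
                    Z.eqb (Z.of_nat a * tri x + Z.of_nat b * tri y + Z.of_nat c * tri z)
                          (Z.of_nat n))
                 (list_prod (list_prod (zrange n) (zrange n)) (zrange n))).

Definition Csum (a : nat -> C) : C :=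
  (Series (fun n => fst (a n)), Series (fun n => snd (a n))).

Definition psi (q : C) : C := Csum (fun n => (q ^ (n * (n + 1) / 2))%C).

(* Ramanujan's phi(q) = sum_{n in Z} q^{n^2}, split as n >= 0 and n = -(m+1), m >= 0. *)
Definition phi (q : C) : C :=
  (Csum (fun n => q ^ (n * n)) + Csum (fun m => q ^ ((m + 1) * (m + 1))))%C.

(* Main.v *)
Require Import Defs.
From Stdlib Require Import Bool Reals ZArith List Lia Lra FinFun.
From Coquelicot Require Import Coquelicot.

Module PA1.
Import ListNotations.
Local Open Scope bool_scope.

Lemma bij_len {A B : Type} (L1 : list A) (L2 : list B) (P : A -> bool) (Q : B -> bool)
  (f : A -> B) (g : B -> A) :
  NoDup L1 -> NoDup L2 ->
  (forall x, In x L1 -> P x = true -> In (f x) L2 /\ Q (f x) = true /\ g (f x) = x) ->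
  (forall y, In y L2 -> Q y = true -> In (g y) L1 /\ P (g y) = true /\ f (g y) = y) ->
  length (filter P L1) = length (filter Q L2).
Proof.
  intros N1 N2 H1 H2. apply Nat.le_antisymm.
  - rewrite <- (length_map g (filter Q L2)). apply NoDup_incl_length.
    + apply NoDup_filter; auto.
    + intros x Hx. apply filter_In in Hx as [Hx Px].
      destruct (H1 x Hx Px) as (Hin & Hq & Hgf).
      rewrite <- Hgf. apply in_map. apply filter_In; auto.
  - rewrite <- (length_map f (filter P L1)). apply NoDup_incl_length.
    + apply NoDup_filter; auto.
    + intros y Hy. apply filter_In in Hy as [Hy Qy].
      destruct (H2 y Hy Qy) as (Hin & Hp & Hfg).
      rewrite <- Hfg. apply in_map. apply filter_In; auto.
Qed.

Lemma len_split {A : Type} (L : list A) (P Q : A -> bool) :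
  length (filter P L) =
  (length (filter (fun x => P x && Q x) L) + length (filter (fun x => P x && negb (Q x)) L))%nat.
Proof.
  induction L as [|a L IH]; simpl; auto.
  destruct (P a), (Q a); simpl; lia.
Qed.

Lemma len_filter_map {A B : Type} (P : B -> bool) (h : A -> B) (L : list A) :
  length (filter P (map h L)) = length (filter (fun x => P (h x)) L).
Proof. induction L; simpl; auto. destruct (P (h a)); simpl; auto. Qed.

Lemma len_filter_ext {A : Type} (P Q : A -> bool) (L : list A) :
  (forall x, In x L -> P x = Q x) -> length (filter P L) = length (filter Q L).
Proof. intros H. rewrite (filter_ext_in P Q L); auto. Qed.

Lemma len_prod {A B : Type} (P : A * B -> bool) (LA : list A) (LB : list B) :
  length (filter P (list_prod LA LB)) =
  list_sum (map (fun a => length (filter (fun b => P (a, b)) LB)) LA).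
Proof.
  induction LA as [|a LA IH]; simpl; auto.
  rewrite filter_app, length_app, IH, len_filter_map. reflexivity.
Qed.

Lemma NoDup_prod {A B : Type} (LA : list A) (LB : list B) :
  NoDup LA -> NoDup LB -> NoDup (list_prod LA LB).
Proof.
  intros HA HB. induction HA as [|a LA Ha HA IH]; simpl; [constructor|].
  apply NoDup_app; auto.
  - apply Injective_map_NoDup; auto. intros x y E; congruence.
  - intros [x y] H1 H2. apply in_map_iff in H1 as (y' & E & _). inversion E; subst.
    apply in_prod_iff in H2 as [H2 _]. contradiction.
Qed.

Fixpoint nsum (f : nat -> nat) (n : nat) : nat :=
  match n with O => O | S m => (nsum f m + f m)%nat end.

Lemma nsum_ext f g n : (forall i, (i < n)%nat -> f i = g i) -> nsum f n = nsum g n.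
Proof. induction n; simpl; intros; auto. rewrite IHn, H; auto. Qed.

Lemma nsum_plus f g n : nsum (fun i => f i + g i)%nat n = (nsum f n + nsum g n)%nat.
Proof. induction n; simpl; auto. rewrite IHn; lia. Qed.

Lemma nsum_scal c f n : nsum (fun i => c * f i)%nat n = (c * nsum f n)%nat.
Proof. induction n; simpl; [lia|]. rewrite IHn; lia. Qed.

Lemma nsum_delta (h : Z -> nat) (x : Z) m : (0 <= x)%Z ->
  nsum (fun i => if Z.eqb x (Z.of_nat i) then h (Z.of_nat i) else O) m =
  if Z.ltb x (Z.of_nat m) then h x else O.
Proof.
  intros Hx. induction m; simpl.
  - destruct (Z.ltb_spec x 0); auto; lia.
  - rewrite IHm. destruct (Z.eqb_spec x (Z.of_nat m)).
    + subst. destruct (Z.ltb_spec (Z.of_nat m) (Z.of_nat m)); try lia.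
      destruct (Z.ltb_spec (Z.of_nat m) (Z.pos (Pos.of_succ_nat m))); lia.
    + destruct (Z.ltb_spec x (Z.of_nat m)); destruct (Z.ltb_spec x (Z.pos (Pos.of_succ_nat m))); lia.
Qed.

Lemma distrib {X : Type} (A : list X) (f : X -> Z) (h : Z -> nat) (n : nat) :
  (forall a, In a A -> (0 <= f a)%Z) -> (forall m, (Z.of_nat n < m)%Z -> h m = O) ->
  list_sum (map (fun a => h (f a)) A) =
  nsum (fun i => length (filter (fun a => Z.eqb (f a) (Z.of_nat i)) A) * h (Z.of_nat i))%nat (S n).
Proof.
  intros Hf Hh. induction A as [|a A IH].
  - simpl. clear. induction n; simpl; lia.
  - change (h (f a) + list_sum (map (fun a => h (f a)) A) = nsum (fun i => length (filter (fun a0 => Z.eqb (f a0) (Z.of_nat i)) (a :: A)) * h (Z.of_nat i)) (S n))%nat. rewrite IH by (intros; apply Hf; simpl; auto).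
    transitivity (nsum (fun i => if Z.eqb (f a) (Z.of_nat i) then h (Z.of_nat i) else O) (S n)
      + nsum (fun i => length (filter (fun a0 => Z.eqb (f a0) (Z.of_nat i)) A) * h (Z.of_nat i)) (S n))%nat.
    + rewrite nsum_delta by (apply Hf; simpl; auto).
      destruct (Z.ltb_spec (f a) (Z.of_nat (S n))); auto.
      rewrite Hh by lia. reflexivity.
    + rewrite <- nsum_plus. apply nsum_ext. intros i _. cbn [filter].
      destruct (Z.eqb (f a) (Z.of_nat i)); simpl; lia.
Qed.

End PA1.
Import PA1.

Module PA2.
Import ListNotations.
Local Open Scope bool_scope.

Definition inb (B : nat) (x : Z) : Prop := (- Z.of_nat B - 1 <= x <= Z.of_nat B)%Z.

Lemma in_zrange B x : In x (zrange B) <-> inb B x.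
Proof.
  unfold zrange, inb. rewrite in_map_iff. split.
  - intros (k & <- & Hk). apply in_seq in Hk. lia.
  - intros H. exists (Z.to_nat (x + Z.of_nat B + 1)). split; [lia|]. apply in_seq. lia.
Qed.

Lemma NoDup_zrange B : NoDup (zrange B).
Proof.
  unfold zrange. apply Injective_map_NoDup; [|apply seq_NoDup].
  intros a b E. lia.
Qed.

Definition box B := list_prod (zrange B) (zrange B).
Definition cnt2 (B : nat) (P : Z -> Z -> bool) : nat :=
  length (filter (fun p => P (fst p) (snd p)) (box B)).
Definition cnt1 (B : nat) (P : Z -> bool) : nat := length (filter P (zrange B)).
Definition cnt (g : nat -> nat) (i : nat) : nat :=
  length (filter (fun k => Nat.eqb (g k) i) (seq 0 (S i))).

Lemma bij2 B1 B2 (P Q : Z -> Z -> bool) (f1 f2 g1 g2 : Z -> Z -> Z) :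
  (forall x y, inb B1 x -> inb B1 y -> P x y = true ->
     inb B2 (f1 x y) /\ inb B2 (f2 x y) /\ Q (f1 x y) (f2 x y) = true /\
     g1 (f1 x y) (f2 x y) = x /\ g2 (f1 x y) (f2 x y) = y) ->
  (forall u v, inb B2 u -> inb B2 v -> Q u v = true ->
     inb B1 (g1 u v) /\ inb B1 (g2 u v) /\ P (g1 u v) (g2 u v) = true /\
     f1 (g1 u v) (g2 u v) = u /\ f2 (g1 u v) (g2 u v) = v) ->
  cnt2 B1 P = cnt2 B2 Q.
Proof.
  intros H1 H2. unfold cnt2, box.
  apply (bij_len _ _ _ _ (fun p => (f1 (fst p) (snd p), f2 (fst p) (snd p)))
                         (fun p => (g1 (fst p) (snd p), g2 (fst p) (snd p))));
    try (apply NoDup_prod; apply NoDup_zrange).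
  - intros [x y] Hin HP. simpl in *. apply in_prod_iff in Hin as [Hx Hy].
    apply in_zrange in Hx, Hy. destruct (H1 x y Hx Hy HP) as (A & B & C & D & E).
    rewrite D, E. repeat split; auto. apply in_prod_iff; split; apply in_zrange; auto.
  - intros [x y] Hin HP. simpl in *. apply in_prod_iff in Hin as [Hx Hy].
    apply in_zrange in Hx, Hy. destruct (H2 x y Hx Hy HP) as (A & B & C & D & E).
    rewrite D, E. repeat split; auto. apply in_prod_iff; split; apply in_zrange; auto.
Qed.

Lemma cnt2_split B P Q :
  cnt2 B P = (cnt2 B (fun x y => P x y && Q x y) + cnt2 B (fun x y => P x y && negb (Q x y)))%nat.
Proof. unfold cnt2. apply len_split with (Q := fun p => Q (fst p) (snd p)). Qed.

Lemma cnt2_ext B P Q : (forall x y, P x y = Q x y) -> cnt2 B P = cnt2 B Q.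
Proof. intros H. unfold cnt2. apply len_filter_ext. intros; apply H. Qed.

Lemma tri2 x : (2 * tri x = x * (x + 1))%Z.
Proof.
  unfold tri. destruct (Z.Even_or_Odd x) as [[k ->]|[k ->]].
  - replace (2 * k * (2 * k + 1))%Z with ((k * (2 * k + 1)) * 2)%Z by ring.
    rewrite Z.div_mul by lia. ring.
  - replace ((2 * k + 1) * (2 * k + 1 + 1))%Z with (((2 * k + 1) * (k + 1)) * 2)%Z by ring.
    rewrite Z.div_mul by lia. ring.
Qed.

Lemma tri_bounds x : (0 <= tri x /\ x <= tri x /\ - x - 1 <= tri x)%Z.
Proof. pose proof (tri2 x). destruct (Z_le_gt_dec 0 x); nia. Qed.

Lemma odd_sq x : ((2 * x + 1) * (2 * x + 1) = 8 * tri x + 1)%Z.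
Proof. pose proof (tri2 x). nia. Qed.

Lemma tri_neg x : tri (- x - 1) = tri x.
Proof. pose proof (tri2 x). pose proof (tri2 (-x-1)). nia. Qed.

Lemma tri_nat n : Z.of_nat (n * (n + 1) / 2) = tri (Z.of_nat n).
Proof.
  unfold tri. rewrite Nat2Z.inj_div, Nat2Z.inj_mul, Nat2Z.inj_add. reflexivity.
Qed.

Lemma sq_inb B u : (u * u <= Z.of_nat B)%Z -> inb B u.
Proof. unfold inb. intros. destruct (Z_le_gt_dec 0 u); nia. Qed.

Lemma tri_inb B u : (tri u <= Z.of_nat B)%Z -> inb B u.
Proof. unfold inb. intros. pose proof (tri_bounds u). lia. Qed.

Lemma sqmod2 a : ((a * a) mod 2 = a mod 2)%Z.
Proof.
  destruct (Z.Even_or_Odd a) as [[k ->]|[k ->]].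
  - replace (2 * k * (2 * k))%Z with ((2 * k * k) * 2)%Z by ring.
    rewrite Z.mod_mul by lia. Z.div_mod_to_equations. lia.
  - replace ((2 * k + 1) * (2 * k + 1))%Z with (1 + (2 * k * k + 2 * k) * 2)%Z by ring.
    rewrite Z.mod_add by lia. Z.div_mod_to_equations. lia.
Qed.

Lemma par35 s t : ((3 * s * s + 5 * t * t) mod 2 = (s + t) mod 2)%Z.
Proof.
  pose proof (sqmod2 s). pose proof (sqmod2 t).
  rewrite <- Z.mul_assoc, <- (Z.mul_assoc 5).
  rewrite Z.add_mod, (Z.mul_mod 3), (Z.mul_mod 5), H, H0 by lia.
  rewrite <- (Z.mul_mod 3), <- (Z.mul_mod 5) by lia.
  rewrite <- Z.add_mod by lia.
  Z.div_mod_to_equations. lia.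
Qed.

End PA2.
Import PA2.

Module PA3.
Import ListNotations.
Local Open Scope bool_scope.
Local Open Scope Z_scope.

Definition zl (N : nat) := map Z.of_nat (seq 0 N).

Lemma chk_ok (f : Z -> Z -> bool) N :
  forallb (fun a => forallb (fun b => f a b) (zl N)) (zl N) = true ->
  forall a b, 0 <= a < Z.of_nat N -> 0 <= b < Z.of_nat N -> f a b = true.
Proof.
  intros H a b Ha Hb. rewrite forallb_forall in H.
  assert (Ia : In a (zl N)). { unfold zl. apply in_map_iff. exists (Z.to_nat a). split; [lia|]. apply in_seq; lia. }
  assert (Ib : In b (zl N)). { unfold zl. apply in_map_iff. exists (Z.to_nat b). split; [lia|]. apply in_seq; lia. }
  specialize (H a Ia). rewrite forallb_forall in H. auto.
Qed.

Definition f1 (a b : Z) : bool :=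
  negb (a mod 2 =? 1) || negb (b mod 2 =? 1) || negb ((3*a*a+5*b*b) mod 32 =? 0)
  || ((a + 5*b) mod 8 =? 0) || ((a - 5*b) mod 8 =? 0).
Definition f2 (a b : Z) : bool :=
  negb (a mod 2 =? 1) || negb (b mod 2 =? 1) || negb ((3*a*a+5*b*b) mod 32 =? 16)
  || (((a + 5*b) mod 16 =? 0) && ((3*a - b) mod 16 =? 0))
  || (((a - 5*b) mod 16 =? 0) && ((3*a + b) mod 16 =? 0)).

Lemma f1_ok : forall a b, 0 <= a < 16 -> 0 <= b < 16 -> f1 a b = true.
Proof. intros. apply (chk_ok f1 16); [vm_compute; reflexivity | simpl; lia | simpl; lia]. Qed.
Lemma f2_ok : forall a b, 0 <= a < 16 -> 0 <= b < 16 -> f2 a b = true.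
Proof. intros. apply (chk_ok f2 16); [vm_compute; reflexivity | simpl; lia | simpl; lia]. Qed.

Lemma red16 u v : exists a b, 0 <= a < 16 /\ 0 <= b < 16 /\
  u mod 16 = a /\ v mod 16 = b /\
  exists W, 3*u*u+5*v*v = 3*a*a+5*b*b + 32 * W.
Proof.
  exists (u mod 16), (v mod 16).
  split; [apply Z.mod_pos_bound; lia|]. split; [apply Z.mod_pos_bound; lia|].
  split; auto. split; auto.
  pose proof (Z_div_mod_eq_full u 16) as Hu. pose proof (Z_div_mod_eq_full v 16) as Hv.
  set (p := u / 16) in *. set (q := v / 16) in *. set (a := u mod 16) in *. set (b := v mod 16) in *.
  exists (24*p*p + 3*p*a + 40*q*q + 5*q*b). clearbody p q a b. subst u v. ring.
Qed.

Lemma nt1 u v : u mod 2 = 1 -> v mod 2 = 1 -> (3*u*u+5*v*v) mod 32 = 0 ->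
  (u + 5*v) mod 8 = 0 \/ (u - 5*v) mod 8 = 0.
Proof.
  intros Hu Hv H. destruct (red16 u v) as (a & b & Ha & Hb & Ea & Eb & W & EW).
  pose proof (f1_ok a b Ha Hb) as F. unfold f1 in F.
  rewrite EW in H.
  repeat (apply orb_prop in F; destruct F as [F|F]); try (apply negb_true_iff in F);
    rewrite ?Z.eqb_eq, ?Z.eqb_neq in F; Z.div_mod_to_equations; lia.
Qed.

Lemma nt2 u v : u mod 2 = 1 -> v mod 2 = 1 -> (3*u*u+5*v*v) mod 32 = 16 ->
  ((u + 5*v) mod 16 = 0 /\ (3*u - v) mod 16 = 0) \/ ((u - 5*v) mod 16 = 0 /\ (3*u + v) mod 16 = 0).
Proof.
  intros Hu Hv H. destruct (red16 u v) as (a & b & Ha & Hb & Ea & Eb & W & EW).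
  pose proof (f2_ok a b Ha Hb) as F. unfold f2 in F.
  rewrite EW in H.
  repeat (apply orb_prop in F; destruct F as [F|F]); try (apply negb_true_iff in F);
    try (apply andb_prop in F; destruct F as [F F']; rewrite ?Z.eqb_eq in F'); 
    rewrite ?Z.eqb_eq, ?Z.eqb_neq in F; Z.div_mod_to_equations; lia.
Qed.

End PA3.
Import PA3.

Module PA4.
Import ListNotations.
Local Open Scope bool_scope.
Local Open Scope Z_scope.

Definition rxy (M : Z) (x y : Z) : bool := 3 * tri x + 5 * tri y =? M.
Definition QO (K : Z) (u v : Z) : bool := (u mod 2 =? 1) && (v mod 2 =? 1) && (3*u*u + 5*v*v =? K).
Definition QS (M : Z) (s t : Z) : bool := 3*s*s + 5*t*t =? M.
Definition rr (M : Z) := cnt2 (Z.to_nat M) (rxy M).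
Definition OO (K : Z) := cnt2 (Z.to_nat K) (QO K).
Definition SS (M : Z) := cnt2 (Z.to_nat M) (QS M).

Ltac spl := repeat match goal with |- _ /\ _ => split end.
Ltac sqs := repeat match goal with
  | u : Z |- _ => lazymatch goal with H : 0 <= u * u |- _ => fail | _ => pose proof (Z.square_nonneg u) end end.
Ltac is_lit x := match x with Z0 => idtac | Zpos _ => idtac | Zneg _ => idtac end.
Ltac clear_nl := repeat match goal with H : context [(?a * ?b)%Z] |- _ =>
  tryif is_lit a then fail else (tryif is_lit b then fail else clear H) end.
Ltac md := clear_nl; Z.div_mod_to_equations; lia.
Ltac bs := repeat (match goal with
 | H : (_ && _) = true |- _ => apply andb_true_iff in H; destruct H
 | H : (_ && _) = false |- _ => apply andb_false_iff in H
 | H : (_ =? _) = true |- _ => apply Z.eqb_eq in H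
 | H : negb _ = true |- _ => apply negb_true_iff in H
 | H : (_ =? _) = false |- _ => apply Z.eqb_neq in H
 | |- (_ && _) = true => apply andb_true_iff; split
 | |- (_ =? _) = true => apply Z.eqb_eq
 | |- negb _ = true => apply negb_true_iff
 | |- (_ =? _) = false => apply Z.eqb_neq
 end).

Lemma cnt2_none B P : (forall x y, P x y = false) -> cnt2 B P = 0%nat.
Proof. intros H. unfold cnt2. induction (box B) as [|[x y] l IH]; simpl; auto. rewrite H; auto. Qed.

Lemma odd_tri u : u mod 2 = 1 -> u * u = 8 * tri ((u-1)/2) + 1 /\ u = 2 * ((u-1)/2) + 1.
Proof.
  intros H. assert (Hu : u = 2 * ((u-1)/2) + 1) by (Z.div_mod_to_equations; lia).
  set (x := (u-1)/2) in *. clearbody x. split; auto. rewrite Hu. apply odd_sq.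
Qed.

Lemma inbZ K x : 0 <= K -> x * x <= K -> inb (Z.to_nat K) x.
Proof. intros. apply sq_inb. lia. Qed.

Ltac fin := spl; try apply inbZ; bs; try lia; try md.

Lemma rr_box B M : 0 <= M <= Z.of_nat B -> cnt2 B (rxy M) = rr M.
Proof.
  intros HM. unfold rr.
  apply bij2 with (f1 := fun x y => x) (f2 := fun x y => y) (g1 := fun x y => x) (g2 := fun x y => y);
  intros x y Hx Hy H; unfold rxy in *; bs; pose proof (tri_bounds x); pose proof (tri_bounds y);
  spl; try apply tri_inb; bs; lia.
Qed.

Lemma rr_none B M : (M < 0 \/ M = 1) -> cnt2 B (rxy M) = 0%nat.
Proof.
  intros HM. apply cnt2_none. intros x y. unfold rxy. bs.
  pose proof (tri_bounds x); pose proof (tri_bounds y). lia.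
Qed.

Lemma rr_OO M : 0 <= M -> rr M = OO (8*M+8).
Proof.
  intros HM. unfold rr, OO.
  apply bij2 with (f1 := fun x y => 2*x+1) (f2 := fun x y => 2*y+1)
                  (g1 := fun u v => (u-1)/2) (g2 := fun u v => (v-1)/2).
  - intros x y _ _ H. unfold rxy, QO in *. bs.
    pose proof (odd_sq x); pose proof (odd_sq y); pose proof (tri_bounds x); pose proof (tri_bounds y).
    sqs; fin.
  - intros u v _ _ H. unfold rxy, QO in *. bs.
    destruct (odd_tri u H) as [E1 E2]. destruct (odd_tri v H1) as [E3 E4].
    set (x := (u-1)/2) in *. set (y := (v-1)/2) in *. clearbody x y.
    pose proof (tri_bounds x); pose proof (tri_bounds y).
    spl; try apply tri_inb; bs; try lia.
Qed.

Lemma OO_32 K : 1 <= K -> OO (32*K) = OO (8*K).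
Proof.
  intros HK. unfold OO.
  rewrite (cnt2_split _ _ (fun u v => (u + 5*v) mod 8 =? 0)).
  rewrite (cnt2_split (Z.to_nat (8*K)) _ (fun u v => (u + v) mod 4 =? 2)).
  set (A := cnt2 _ (fun u v => QO (32*K) u v && ((u + 5*v) mod 8 =? 0))).
  set (C := cnt2 _ (fun u v => QO (8*K) u v && ((u + v) mod 4 =? 2))).
  assert (E1 : cnt2 (Z.to_nat (32*K)) (fun u v => QO (32*K) u v && negb ((u + 5*v) mod 8 =? 0)) = A).
  { unfold A. apply bij2 with (f1 := fun u v => u) (f2 := fun u v => -v) (g1 := fun u v => u) (g2 := fun u v => -v);
    intros u v _ _ H; unfold QO in *; bs.
    - assert (Hm : (3*u*u+5*v*v) mod 32 = 0) by (Z.div_mod_to_equations; lia).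
      destruct (nt1 u v) as [Hn|Hn]; [auto|auto|auto|lia|]. sqs.
      sqs; fin.
    - sqs. sqs; fin. }
  assert (E2 : cnt2 (Z.to_nat (8*K)) (fun u v => QO (8*K) u v && negb ((u + v) mod 4 =? 2)) = C).
  { unfold C. apply bij2 with (f1 := fun u v => u) (f2 := fun u v => -v) (g1 := fun u v => u) (g2 := fun u v => -v);
    intros u v _ _ H; unfold QO in *; bs; sqs;
      sqs; fin. }
  assert (E3 : C = A).
  { unfold A, C.
    apply bij2 with (f1 := fun u v => (u + 5*v)/2) (f2 := fun u v => (3*u - v)/2)
                    (g1 := fun u v => (u + 5*v)/8) (g2 := fun u v => (3*u - v)/8);
    intros u v _ _ H; unfold QO in *; bs.
    - assert (HU : exists U, u + 5*v = 2*U) by (exists ((u + 5*v)/2); Z.div_mod_to_equations; lia).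
      assert (HV : exists V, 3*u - v = 2*V) by (exists ((3*u - v)/2); Z.div_mod_to_equations; lia).
      destruct HU as [U HU2]; destruct HV as [V HV2].
      rewrite HU2, HV2. rewrite !(Z.mul_comm 2), !Z.div_mul by lia.
      assert (EQ : 3*(2*U)*(2*U) + 5*(2*V)*(2*V) = 16*(3*u*u+5*v*v)) by (rewrite <- HU2, <- HV2; ring).
      replace (U*2) with (2*U) in * by ring.
      sqs; fin.
    - assert (HU : exists U, u + 5*v = 8*U) by (exists ((u + 5*v)/8); Z.div_mod_to_equations; lia).
      assert (HV : exists V, 3*u - v = 8*V) by (exists ((3*u - v)/8); Z.div_mod_to_equations; lia).
      destruct HU as [U HU2]; destruct HV as [V HV2].
      rewrite HU2, HV2. rewrite !(Z.mul_comm 8), !Z.div_mul by lia.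
      assert (EQ : 3*(8*U)*(8*U) + 5*(8*V)*(8*V) = 16*(3*u*u+5*v*v)) by (rewrite <- HU2, <- HV2; ring).
      assert (HUV : U + 5*V = 2*u /\ 3*U - V = 2*v) by lia.
      assert (Hpar : (U + V) mod 2 = 0) by (Z.div_mod_to_equations; lia).
      assert (Hodd : U mod 2 = 1).
      { destruct (Z.eq_dec (U mod 2) 1) as [|Hne]; auto. exfalso.
        assert (Ue : U = 2*(U/2)) by (Z.div_mod_to_equations; lia).
        assert (Ve : V = 2*(V/2)) by (Z.div_mod_to_equations; lia).
        set (a := U/2) in *. set (c := V/2) in *. clearbody a c. subst U V.
        assert (Hac : (a + c) mod 2 = 1) by (Z.div_mod_to_equations; lia).
        pose proof (par35 a c) as P.
        assert (Eq2 : 3*a*a+5*c*c = 2*K) by lia.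
        rewrite Eq2 in P. Z.div_mod_to_equations. lia. }
      sqs; fin. }
  lia.
Qed.

Lemma OO_16 M : 1 <= M -> M mod 2 = 1 -> OO (16*M) = (2 * SS M)%nat.
Proof.
  intros HM Hodd. unfold OO, SS.
  rewrite (cnt2_split _ _ (fun u v => ((u + 5*v) mod 16 =? 0) && ((3*u - v) mod 16 =? 0))).
  set (A := cnt2 _ (fun u v => QO (16*M) u v && (((u + 5*v) mod 16 =? 0) && ((3*u - v) mod 16 =? 0)))).
  assert (E1 : cnt2 (Z.to_nat (16*M)) (fun u v => QO (16*M) u v &&
       negb (((u + 5*v) mod 16 =? 0) && ((3*u - v) mod 16 =? 0))) = A).
  { unfold A. apply bij2 with (f1 := fun u v => u) (f2 := fun u v => -v) (g1 := fun u v => u) (g2 := fun u v => -v);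
    intros u v _ _ H; unfold QO in *; bs.
    - assert (Hm : (3*u*u+5*v*v) mod 32 = 16)
        by (match goal with E : 3*u*u+5*v*v = _ |- _ => rewrite E end; md).
      destruct (nt2 u v) as [[Hn Hn']|[Hn Hn']]; [auto|auto|auto| |].
      + exfalso. destruct H0; lia.
      + sqs. fin.
    - sqs. fin. }
  assert (E3 : A = SS M).
  { unfold A, SS.
    apply bij2 with (f1 := fun u v => (u + 5*v)/16) (f2 := fun u v => (3*u - v)/16)
                    (g1 := fun s t => s + 5*t) (g2 := fun s t => 3*s - t);
    intros u v _ _ H; unfold QO, QS in *; bs.
    - assert (HU : exists U, u + 5*v = 16*U) by (exists ((u + 5*v)/16); md).
      assert (HV : exists V, 3*u - v = 16*V) by (exists ((3*u - v)/16); md).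
      destruct HU as [U HU2]; destruct HV as [V HV2].
      rewrite HU2, HV2. rewrite !(Z.mul_comm 16), !Z.div_mul by lia.
      assert (EQ : 3*(16*U)*(16*U) + 5*(16*V)*(16*V) = 16*(3*u*u+5*v*v)) by (rewrite <- HU2, <- HV2; ring).
      sqs. fin.
    - pose proof (par35 u v) as P. rewrite H in P.
      assert (EQ : 3*(u + 5*v)*(u + 5*v) + 5*(3*u - v)*(3*u - v) = 16*(3*u*u+5*v*v)) by ring.
      assert (Hpar : (u + v) mod 2 = 1) by (rewrite <- P; exact Hodd).
      replace (u + 5*v) with (u + 5*v) by ring.
      replace ((u + 5 * v + 5 * (3 * u - v)) / 16) with u by (Z.div_mod_to_equations; lia).
      replace ((3 * (u + 5 * v) - (3 * u - v)) / 16) with v by (Z.div_mod_to_equations; lia).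
      pose proof (Z.square_nonneg (u + 5*v)). pose proof (Z.square_nonneg (3*u - v)).
      sqs. fin. }
  unfold SS in E3. lia.
Qed.

Definition P1 (j : nat) := cnt2 j (fun a c => 10*a*a + 12*tri c =? Z.of_nat j).
Definition P2 (j : nat) := cnt2 j (fun a c => 6*a*a + 20*tri c =? Z.of_nat j - 1).

Lemma SS_split (j : nat) : SS (2 * Z.of_nat j + 3) = (P1 j + P2 j)%nat.
Proof.
  unfold SS. rewrite (cnt2_split _ _ (fun s t => t mod 2 =? 0)). f_equal.
  - unfold P1. apply bij2 with (f1 := fun s t => t/2) (f2 := fun s t => (s-1)/2)
                               (g1 := fun a c => 2*c+1) (g2 := fun a c => 2*a);
    intros s t _ _ H; unfold QS in *; bs.
    + pose proof (par35 s t) as P. 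
      match goal with E : 3*s*s+5*t*t = _ |- _ => rewrite E in P end.
      assert (Hs : s = 2*((s-1)/2)+1) by md.
      assert (Ht : t = 2*(t/2)) by md.
      set (c := (s-1)/2) in *. set (a := t/2) in *. clearbody c a. subst s t.
      pose proof (odd_sq c). pose proof (tri_bounds c). sqs.
      spl; [apply sq_inb; lia | apply tri_inb; lia | bs; lia | lia | lia].
    + pose proof (odd_sq t). pose proof (tri_bounds t). sqs.
      spl; try apply inbZ; bs; try lia; md.
  - unfold P2. apply bij2 with (f1 := fun s t => s/2) (f2 := fun s t => (t-1)/2)
                               (g1 := fun a c => 2*a) (g2 := fun a c => 2*c+1);
    intros s t _ _ H; unfold QS in *; bs.
    + pose proof (par35 s t) as P. 
      match goal with E : 3*s*s+5*t*t = _ |- _ => rewrite E in P end.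
      assert (Ht : t = 2*((t-1)/2)+1) by md.
      assert (Hs : s = 2*(s/2)) by md.
      set (c := (t-1)/2) in *. set (a := s/2) in *. clearbody c a. subst s t.
      pose proof (odd_sq c). pose proof (tri_bounds c). sqs.
      spl; [apply sq_inb; lia | apply tri_inb; lia | bs; lia | lia | lia].
    + pose proof (odd_sq t). pose proof (tri_bounds t). sqs.
      spl; try apply inbZ; bs; try lia; md.
Qed.

End PA4.
Import PA4.

Module PA5.
Import ListNotations.
Local Open Scope bool_scope.

Lemma len_none {A : Type} (P : A -> bool) L : (forall x, In x L -> P x = false) -> length (filter P L) = O.
Proof. induction L; simpl; intros H; auto. rewrite H; auto. Qed.

Lemma pairconv B (al be : Z -> Z) (J : nat) :
  (forall a, (0 <= al a)%Z) -> (forall c, (0 <= be c)%Z) ->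
  cnt2 B (fun a c => (al a + be c =? Z.of_nat J)%Z) =
  nsum (fun i => cnt1 B (fun a => (al a =? Z.of_nat i)%Z) *
                 cnt1 B (fun c => (be c =? Z.of_nat (J - i))%Z))%nat (S J).
Proof.
  intros Ha Hb. unfold cnt2, box. rewrite len_prod. simpl fst. simpl snd.
  set (h := fun m => if (m <=? Z.of_nat J)%Z then cnt1 B (fun c => (be c =? Z.of_nat J - m)%Z) else O).
  rewrite (map_ext _ (fun a => h (al a))).
  2:{ intros a. unfold h. destruct (Z.leb_spec (al a) (Z.of_nat J)).
      - unfold cnt1. apply len_filter_ext. intros c _. 
        destruct (Z.eqb_spec (al a + be c) (Z.of_nat J)); destruct (Z.eqb_spec (be c) (Z.of_nat J - al a)); auto; lia.
      - apply len_none. intros c _. apply Z.eqb_neq. specialize (Hb c). lia. }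
  rewrite (distrib _ al h J).
  - apply nsum_ext. intros i Hi. unfold h. f_equal.
    destruct (Z.leb_spec (Z.of_nat i) (Z.of_nat J)); [|lia].
    unfold cnt1. apply len_filter_ext. intros c _. f_equal. lia.
  - intros; auto.
  - intros m Hm. unfold h. destruct (Z.leb_spec m (Z.of_nat J)); auto; lia.
Qed.

Definition cnt_sq (e i : nat) := (cnt (fun k => e * (k * k)) i + cnt (fun k => e * ((k + 1) * (k + 1))) i)%nat.
Definition cnt_tr (e i : nat) := cnt (fun k => e * (k * (k + 1) / 2))%nat i.

Lemma zr_split B (P : Z -> bool) :
  cnt1 B P = (length (filter (fun a => P a && (0 <=? a)%Z) (zrange B)) +
              length (filter (fun a => P a && negb (0 <=? a)%Z) (zrange B)))%nat.
Proof. unfold cnt1. apply len_split. Qed.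

Lemma cnt1_sq B e i : (1 <= e)%nat -> (i <= B)%nat ->
  cnt1 B (fun a => (Z.of_nat e * a * a =? Z.of_nat i)%Z) = cnt_sq e i.
Proof.
  intros He Hi. rewrite zr_split. unfold cnt_sq, cnt. f_equal.
  - apply bij_len with (f := fun a => Z.to_nat a) (g := fun k => Z.of_nat k);
      [apply NoDup_zrange | apply seq_NoDup | |].
    + intros a Ha H. apply andb_true_iff in H as [H1 H2]. apply Z.eqb_eq in H1. apply Z.leb_le in H2.
      assert (a <= a * a)%Z by nia.
      split; [apply in_seq; nia|]. split; [|lia]. apply Nat.eqb_eq, Nat2Z.inj.
      rewrite !Nat2Z.inj_mul, Z2Nat.id by lia. lia.
    + intros k Hk H. apply Nat.eqb_eq in H. apply in_seq in Hk.
      split; [apply in_zrange; unfold inb; lia|]. split; [|lia].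
      apply andb_true_iff; split; [apply Z.eqb_eq; rewrite <- H, !Nat2Z.inj_mul; lia | apply Z.leb_le; lia].
  - apply bij_len with (f := fun a => Z.to_nat (- a - 1)) (g := fun k => (- Z.of_nat k - 1)%Z);
      [apply NoDup_zrange | apply seq_NoDup | |].
    + intros a Ha H. apply andb_true_iff in H as [H1 H2]. apply Z.eqb_eq in H1. apply negb_true_iff, Z.leb_gt in H2.
      assert (- a - 1 <= a * a)%Z by nia.
      split; [apply in_seq; nia|]. split; [|lia]. apply Nat.eqb_eq, Nat2Z.inj.
      rewrite !Nat2Z.inj_mul, Nat2Z.inj_add, Z2Nat.id by lia. lia.
    + intros k Hk H. apply Nat.eqb_eq in H. apply in_seq in Hk.
      split; [apply in_zrange; unfold inb; lia|]. split; [|lia].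
      apply andb_true_iff; split; [apply Z.eqb_eq; rewrite <- H, !Nat2Z.inj_mul, Nat2Z.inj_add; lia | apply negb_true_iff, Z.leb_gt; lia].
Qed.

Lemma cnt1_tri B e i : (1 <= e)%nat -> (i <= B)%nat ->
  cnt1 B (fun a => (Z.of_nat e * tri a =? Z.of_nat i)%Z) = (2 * cnt_tr e i)%nat.
Proof.
  intros He Hi. rewrite zr_split. unfold cnt_tr, cnt.
  replace (2 * _)%nat with (length (filter (fun k => (e * (k * (k + 1) / 2) =? i)%nat) (seq 0 (S i)))
     + length (filter (fun k => (e * (k * (k + 1) / 2) =? i)%nat) (seq 0 (S i))))%nat by lia.
  f_equal.
  - apply bij_len with (f := fun a => Z.to_nat a) (g := fun k => Z.of_nat k);
      [apply NoDup_zrange | apply seq_NoDup | |].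
    + intros a Ha H. apply andb_true_iff in H as [H1 H2]. apply Z.eqb_eq in H1. apply Z.leb_le in H2.
      pose proof (tri_bounds a). pose proof (tri_nat (Z.to_nat a)). rewrite Z2Nat.id in H0 by lia.
      split; [apply in_seq; nia|]. split; [apply Nat.eqb_eq; nia | lia].
    + intros k Hk H. apply Nat.eqb_eq in H. apply in_seq in Hk. pose proof (tri_nat k).
      split; [apply in_zrange; unfold inb; lia|]. split; [|lia].
      apply andb_true_iff; split; [apply Z.eqb_eq; nia | apply Z.leb_le; lia].
  - apply bij_len with (f := fun a => Z.to_nat (- a - 1)) (g := fun k => (- Z.of_nat k - 1)%Z);
      [apply NoDup_zrange | apply seq_NoDup | |].
    + intros a Ha H. apply andb_true_iff in H as [H1 H2]. apply Z.eqb_eq in H1. apply negb_true_iff, Z.leb_gt in H2.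
      pose proof (tri_bounds a). pose proof (tri_nat (Z.to_nat (-a-1))). rewrite Z2Nat.id in H0 by lia.
      rewrite tri_neg in H0.
      split; [apply in_seq; nia|]. split; [apply Nat.eqb_eq; nia | lia].
    + intros k Hk H. apply Nat.eqb_eq in H. apply in_seq in Hk. pose proof (tri_nat k).
      rewrite tri_neg.
      split; [apply in_zrange; unfold inb; lia|]. split; [|lia].
      apply andb_true_iff; split; [apply Z.eqb_eq; nia | apply negb_true_iff, Z.leb_gt; lia].
Qed.

End PA5.
Import PA5.

Module PA6.
Import ListNotations.
Local Open Scope bool_scope.

Lemma len_prod_swap {A B : Type} (P : A * B -> bool) (LA : list A) (LB : list B) :
  NoDup LA -> NoDup LB ->
  length (filter P (list_prod LA LB)) =
  list_sum (map (fun b => length (filter (fun a => P (a, b)) LA)) LB).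
Proof.
  intros HA HB. transitivity (length (filter (fun p => P (snd p, fst p)) (list_prod LB LA))).
  2:{ rewrite len_prod. reflexivity. }
  apply bij_len with (f := fun p => (snd p, fst p)) (g := fun p => (snd p, fst p));
    try (apply NoDup_prod; auto).
  - intros [a b] Hin H. apply in_prod_iff in Hin as [H1 H2]. simpl. repeat split; auto.
    apply in_prod_iff; auto.
  - intros [b a] Hin H. apply in_prod_iff in Hin as [H1 H2]. simpl. repeat split; auto.
    apply in_prod_iff; auto.
Qed.

Lemma t_decomp C N : t 3 5 C N =
  list_sum (map (fun z => cnt2 N (rxy (Z.of_nat N - Z.of_nat C * tri z)%Z)) (zrange N)).
Proof.
  unfold t. rewrite len_prod_swap; [| apply NoDup_prod; apply NoDup_zrange | apply NoDup_zrange].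
  f_equal. apply map_ext. intros z. unfold cnt2, box. apply len_filter_ext.
  intros [x y] _. cbv beta iota delta [fst snd]. unfold rxy.
  change (Z.of_nat 3) with 3%Z. change (Z.of_nat 5) with 5%Z.
  destruct (Z.eqb_spec (3 * tri x + 5 * tri y + Z.of_nat C * tri z) (Z.of_nat N));
  destruct (Z.eqb_spec (3 * tri x + 5 * tri y) (Z.of_nat N - Z.of_nat C * tri z)); auto; lia.
Qed.

Lemma t_conv (k b N n : nat) : (1 <= b)%nat -> (n <= N)%nat ->
  (forall m : Z, (Z.of_nat n < m)%Z -> cnt2 N (rxy (Z.of_nat N - Z.of_nat k * m)%Z) = O) ->
  t 3 5 (k * b) N =
  nsum (fun i => 2 * cnt_tr b i * cnt2 N (rxy (Z.of_nat N - Z.of_nat k * Z.of_nat i)%Z))%nat (S n).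
Proof.
  intros Hb Hn Hz. rewrite t_decomp.
  pose (f := fun z => (Z.of_nat b * tri z)%Z).
  pose (h := fun m => cnt2 N (rxy (Z.of_nat N - Z.of_nat k * m)%Z)).
  transitivity (list_sum (map (fun z => h (f z)) (zrange N))).
  { f_equal. apply map_ext. intros z. unfold h, f. f_equal. f_equal. rewrite Nat2Z.inj_mul. ring. }
  rewrite (distrib _ f h n).
  - apply nsum_ext. intros i Hi. f_equal.
    pose proof (cnt1_tri N b i Hb ltac:(lia)) as E. unfold cnt1 in E. unfold f. rewrite E. reflexivity.
  - intros a _. pose proof (tri_bounds a). unfold f. apply Z.mul_nonneg_nonneg; lia.
  - exact Hz.
Qed.

End PA6.
Import PA6.

Module PA7.
Import ListNotations.
Local Open Scope bool_scope.

Definition conv (a c : nat -> nat) (n : nat) : nat := nsum (fun i => a i * c (n - i))%nat (S n).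
Definition sh (a : nat -> nat) (n : nat) : nat := match n with O => O | S m => a m end.
Definition Sc (j : nat) : nat := (conv (cnt_sq 10) (cnt_tr 12) j + sh (conv (cnt_sq 6) (cnt_tr 20)) j)%nat.

Lemma comb1 b n : (1 <= b)%nat -> t 3 5 (4 * b) (4 * n + 3) = t 3 5 b n.
Proof.
  intros Hb.
  rewrite (t_conv 4 b (4 * n + 3) n Hb ltac:(lia)).
  2:{ intros m Hm. apply rr_none. lia. }
  replace (t 3 5 b n) with (t 3 5 (1 * b) n) by (rewrite Nat.mul_1_l; reflexivity).
  rewrite (t_conv 1 b n n Hb ltac:(lia)).
  2:{ intros m Hm. apply rr_none. lia. }
  apply nsum_ext. intros i Hi. f_equal.
  set (d := (Z.of_nat n - Z.of_nat i)%Z).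
  rewrite (rr_box (4 * n + 3) (Z.of_nat (4 * n + 3) - Z.of_nat 4 * Z.of_nat i)%Z) by lia.
  rewrite (rr_box n (Z.of_nat n - Z.of_nat 1 * Z.of_nat i)%Z) by lia.
  replace (Z.of_nat (4 * n + 3) - Z.of_nat 4 * Z.of_nat i)%Z with (4 * d + 3)%Z by lia.
  replace (Z.of_nat n - Z.of_nat 1 * Z.of_nat i)%Z with d by lia.
  rewrite !rr_OO by lia.
  replace (8 * (4 * d + 3) + 8)%Z with (32 * (d + 1))%Z by ring.
  rewrite OO_32 by lia. f_equal. ring.
Qed.

Lemma P1_conv j : P1 j = (2 * conv (cnt_sq 10) (cnt_tr 12) j)%nat.
Proof.
  unfold P1. pose proof (pairconv j (fun a => 10 * a * a)%Z (fun c => 12 * tri c)%Z j) as E.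
  cbv beta in E. rewrite E.
  2:{ intros. nia. } 2:{ intros c. pose proof (tri_bounds c). lia. }
  unfold conv. rewrite <- nsum_scal. apply nsum_ext. intros i Hi.
  pose proof (cnt1_sq j 10 i ltac:(lia) ltac:(lia)) as E1. change (Z.of_nat 10) with 10%Z in E1. rewrite E1.
  pose proof (cnt1_tri j 12 (j - i) ltac:(lia) ltac:(lia)) as E2. change (Z.of_nat 12) with 12%Z in E2. rewrite E2.
  lia.
Qed.

Lemma P2_conv j : P2 j = (2 * sh (conv (cnt_sq 6) (cnt_tr 20)) j)%nat.
Proof.
  unfold P2. destruct j as [|j].
  - change (2 * sh (conv (cnt_sq 6) (cnt_tr 20)) 0)%nat with 0%nat. apply cnt2_none. intros a c. apply Z.eqb_neq. pose proof (tri_bounds c). pose proof (Z.square_nonneg a). lia.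
  - rewrite (cnt2_ext _ _ (fun a c => (6 * a * a + 20 * tri c =? Z.of_nat j)%Z)).
    2:{ intros a c. f_equal. lia. }
    pose proof (pairconv (S j) (fun a => 6 * a * a)%Z (fun c => 20 * tri c)%Z j) as E.
    cbv beta in E. rewrite E.
    2:{ intros. nia. } 2:{ intros c. pose proof (tri_bounds c). lia. }
    simpl sh. unfold conv. rewrite <- nsum_scal. apply nsum_ext. intros i Hi.
    pose proof (cnt1_sq (S j) 6 i ltac:(lia) ltac:(lia)) as E1. change (Z.of_nat 6) with 6%Z in E1. rewrite E1.
    pose proof (cnt1_tri (S j) 20 (j - i) ltac:(lia) ltac:(lia)) as E2. change (Z.of_nat 20) with 20%Z in E2. rewrite E2.
    lia.
Qed.

Lemma rr_45 (d : nat) : rr (4 * Z.of_nat d + 5)%Z = (4 * Sc d)%nat.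
Proof.
  rewrite rr_OO by lia.
  replace (8 * (4 * Z.of_nat d + 5) + 8)%Z with (16 * (2 * Z.of_nat d + 3))%Z by ring.
  rewrite OO_16 by (try lia; Z.div_mod_to_equations; lia).
  rewrite SS_split, P1_conv, P2_conv. unfold Sc. lia.
Qed.

Lemma comb2 b n : (1 <= b)%nat -> t 3 5 (4 * b) (4 * n + 5) = (8 * conv (cnt_tr b) Sc n)%nat.
Proof.
  intros Hb.
  rewrite (t_conv 4 b (4 * n + 5) n Hb ltac:(lia)).
  2:{ intros m Hm. apply rr_none. lia. }
  unfold conv. rewrite <- nsum_scal. apply nsum_ext. intros i Hi.
  rewrite (rr_box (4 * n + 5) (Z.of_nat (4 * n + 5) - Z.of_nat 4 * Z.of_nat i)%Z) by lia.
  replace (Z.of_nat (4 * n + 5) - Z.of_nat 4 * Z.of_nat i)%Z with (4 * Z.of_nat (n - i) + 5)%Z by lia.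
  rewrite rr_45. lia.
Qed.

End PA7.
Import PA7.

Module PB1.

Lemma sum_n_fst (a : nat -> C) N : fst (sum_n a N) = sum_n (fun n => fst (a n)) N.
Proof.
  induction N.
  - rewrite !sum_O. reflexivity.
  - rewrite !sum_Sn. simpl. rewrite <- IHN. reflexivity.
Qed.

Lemma sum_n_snd (a : nat -> C) N : snd (sum_n a N) = sum_n (fun n => snd (a n)) N.
Proof.
  induction N.
  - rewrite !sum_O. reflexivity.
  - rewrite !sum_Sn. simpl. rewrite <- IHN. reflexivity.
Qed.

Lemma is_series_C (a : nat -> C) l1 l2 :
  is_series (fun n => fst (a n)) l1 -> is_series (fun n => snd (a n)) l2 ->
  @is_series C_AbsRing C_NormedModule a (l1, l2).
Proof.
  unfold is_series. intros H1 H2.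
  apply filterlim_locally. intros eps.
  pose proof (proj1 (filterlim_locally _ _) H1 eps) as E1.
  pose proof (proj1 (filterlim_locally _ _) H2 eps) as E2.
  generalize (filter_and _ _ E1 E2). apply filter_imp. intros N [B1 B2].
  change (ball l1 eps (fst (sum_n a N)) /\ ball l2 eps (snd (sum_n a N))).
  rewrite sum_n_fst, sum_n_snd. split; assumption.
Qed.

Lemma is_series_C_fst (a : nat -> C) l :
  @is_series C_AbsRing C_NormedModule a l -> is_series (fun n => fst (a n)) (fst l).
Proof.
  unfold is_series. intros H.
  apply filterlim_locally. intros eps.
  pose proof (proj1 (filterlim_locally _ _) H eps) as E1.
  revert E1. apply filter_imp. intros N [B1 B2]. rewrite <- sum_n_fst. exact B1.
Qed.

Lemma is_series_C_snd (a : nat -> C) l :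
  @is_series C_AbsRing C_NormedModule a l -> is_series (fun n => snd (a n)) (snd l).
Proof.
  unfold is_series. intros H.
  apply filterlim_locally. intros eps.
  pose proof (proj1 (filterlim_locally _ _) H eps) as E1.
  revert E1. apply filter_imp. intros N [B1 B2]. rewrite <- sum_n_snd. exact B2.
Qed.

Lemma fst_le_Cmod (x : C) : Rabs (fst x) <= Cmod x.
Proof. eapply Rle_trans; [apply Rmax_l | apply Rmax_Cmod]. Qed.
Lemma snd_le_Cmod (x : C) : Rabs (snd x) <= Cmod x.
Proof. eapply Rle_trans; [apply Rmax_r | apply Rmax_Cmod]. Qed.

Lemma pow_decr s n m : 0 <= s <= 1 -> (n <= m)%nat -> s ^ m <= s ^ n.
Proof.
  intros Hs Hnm. replace m with (n + (m - n))%nat by lia. rewrite pow_add.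
  rewrite <- (Rmult_1_r (s ^ n)) at 2. apply Rmult_le_compat_l; [apply pow_le; lra|].
  induction (m - n)%nat; simpl; [lra|]. replace 1 with (1 * 1) by lra.
  apply Rmult_le_compat; try lra. apply pow_le; lra.
Qed.

End PB1.
Import PB1.

Module PB2.
Import ListNotations.

Lemma is_series_of_lim (a : nat -> R) (l : R) : is_lim_seq (sum_n a) l -> is_series a l.
Proof. intros H. exact H. Qed.
Lemma lim_of_is_series (a : nat -> R) (l : R) : is_series a l -> is_lim_seq (sum_n a) l.
Proof. intros H. exact H. Qed.

Lemma INR_cnt_gen (p : nat -> bool) m :
  INR (length (filter p (seq 0 (S m)))) = sum_f_R0 (fun k => if p k then 1 else 0) m.
Proof.
  induction m.
  - simpl. destruct (p 0%nat); simpl; lra.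
  - rewrite seq_S, filter_app, length_app, plus_INR, IHm, tech5. simpl.
    destruct (p (S m)); simpl; lra.
Qed.

Lemma INR_cnt g n : INR (cnt g n) = sum_f_R0 (fun k => if (g k =? n)%nat then 1 else 0) n.
Proof. apply INR_cnt_gen. Qed.

Lemma csum_id (g : nat -> nat) (Hg : forall k, (k <= g k)%nat) (w : nat -> R) N :
  sum_f_R0 (fun n => INR (cnt g n) * w n) N =
  sum_f_R0 (fun k => if (g k <=? N)%nat then w (g k) else 0) N.
Proof.
  induction N.
  - simpl. rewrite INR_cnt. simpl.
    destruct (Nat.eqb_spec (g 0%nat) 0); destruct (Nat.leb_spec (g 0%nat) 0); try lia.
    + rewrite e. ring.
    + ring.
  - rewrite !tech5, IHN, INR_cnt, tech5.
    rewrite (sum_eq (fun k => if (g k <=? S N)%nat then w (g k) else 0)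
      (fun k => (if (g k <=? N)%nat then w (g k) else 0) + (if (g k =? S N)%nat then 1 else 0) * w (S N))).
    2:{ intros k _. destruct (Nat.leb_spec (g k) (S N)), (Nat.leb_spec (g k) N), (Nat.eqb_spec (g k) (S N));
        try lia; try rewrite e; ring. }
    rewrite sum_plus, <- scal_sum.
    assert (L : (if (g (S N) <=? S N)%nat then w (g (S N)) else 0) =
                (if (g (S N) =? S N)%nat then 1 else 0) * w (S N)).
    { pose proof (Hg (S N)). destruct (Nat.leb_spec (g (S N)) (S N)), (Nat.eqb_spec (g (S N)) (S N)); try lia.
      rewrite e; ring. ring. }
    rewrite L. ring.
Qed.

Lemma D_eq g (Hg : forall k, (k <= g k)%nat) w N :
  sum_f_R0 (fun k => w (g k)) N - sum_f_R0 (fun n => INR (cnt g n) * w n) N =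
  sum_f_R0 (fun k => if (g k <=? N)%nat then 0 else w (g k)) N.
Proof.
  rewrite csum_id by auto. rewrite <- minus_sum. apply sum_eq. intros k _.
  destruct (g k <=? N)%nat; ring.
Qed.

Lemma D_bound g (Hg : forall k, (k <= g k)%nat) w s N :
  0 <= s < 1 -> (forall m, Rabs (w m) <= s ^ (2 * m)) ->
  Rabs (sum_f_R0 (fun k => if (g k <=? N)%nat then 0 else w (g k)) N) <= s ^ (S N) / (1 - s).
Proof.
  intros Hs Hw. eapply Rle_trans; [apply Rsum_abs|].
  apply Rle_trans with (sum_f_R0 (fun k => s ^ k * s ^ (S N)) N).
  { apply sum_Rle. intros k Hk. destruct (Nat.leb_spec (g k) N).
    - rewrite Rabs_R0. apply Rmult_le_pos; apply pow_le; lra.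
    - eapply Rle_trans; [apply Hw|]. rewrite <- pow_add. apply pow_decr; [lra|]. pose proof (Hg k). lia. }
  rewrite <- scal_sum, tech3 by lra.
  pose proof (pow_le s (S N) ltac:(lra)) as Hp.
  unfold Rdiv. rewrite <- Rmult_assoc. apply Rmult_le_compat_r.
  - left. apply Rinv_0_lt_compat. lra.
  - nra.
Qed.

Lemma lim_geom_c (c s : R) : 0 <= s < 1 -> is_lim_seq (fun N => c * s ^ N) 0.
Proof.
  intros Hs. pose proof (is_lim_seq_scal_l _ c _ (is_lim_seq_geom s ltac:(rewrite Rabs_right; lra))) as H.
  simpl in H. rewrite Rmult_0_r in H. exact H.
Qed.

Lemma lim_geom_c' (c s : R) : 0 <= s < 1 -> is_lim_seq (fun N => - (c * s ^ N)) 0.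
Proof.
  intros Hs. pose proof (proj1 (is_lim_seq_opp _ _) (lim_geom_c c s Hs)) as H.
  simpl in H. rewrite Ropp_0 in H. exact H.
Qed.

Lemma sparse_R (g : nat -> nat) (Hg : forall k, (k <= g k)%nat) (w : nat -> R) (s : R) :
  0 <= s < 1 -> (forall m, Rabs (w m) <= s ^ (2 * m)) ->
  is_series (fun n => INR (cnt g n) * w n) (Series (fun k => w (g k))).
Proof.
  intros Hs Hw.
  assert (Hex : ex_series (fun k => w (g k))).
  { apply ex_series_Rabs. apply (@ex_series_le R_AbsRing R_CompleteNormedModule _ (fun k => (s ^ 2) ^ k)).
    - intros k. change (norm (Rabs (w (g k)))) with (Rabs (Rabs (w (g k)))). rewrite Rabs_Rabsolu.
      eapply Rle_trans; [apply Hw|]. rewrite <- pow_mult. apply pow_decr; [lra|]. pose proof (Hg k). lia.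
    - apply ex_series_geom. rewrite Rabs_right; [|apply Rle_ge, pow_le; lra]. simpl. nra. }
  pose proof (Series_correct _ Hex) as HT. set (T := Series (fun k => w (g k))) in *.
  apply lim_of_is_series in HT.
  apply is_series_of_lim.
  set (D := fun N => sum_n (fun k => w (g k)) N - sum_n (fun n => INR (cnt g n) * w n) N).
  assert (HD : is_lim_seq D 0).
  { apply is_lim_seq_le_le with (u := fun N => - (s / (1 - s) * s ^ N)) (w := fun N => s / (1 - s) * s ^ N).
    - intros N. unfold D. rewrite !sum_n_Reals, D_eq by auto.
      pose proof (D_bound g Hg w s N Hs Hw) as B.
      replace (s ^ S N / (1 - s)) with (s / (1 - s) * s ^ N) in B by (simpl; field; lra).
      apply Rabs_le_between. exact B.
    - apply lim_geom_c'; lra.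
    - apply lim_geom_c; lra. }
  replace (Finite T) with (Finite (T - 0)) by (f_equal; ring).
  eapply is_lim_seq_ext; [| apply is_lim_seq_minus'; [exact HT | exact HD]].
  intros N. unfold D. ring.
Qed.

End PB2.
Import PB2.

Module PB3.
Import ListNotations.

Definition GF (a : nat -> nat) (q : C) (A : C) : Prop :=
  @is_series C_AbsRing C_NormedModule (fun n => (RtoC (INR (a n)) * q ^ n)%C) A /\
  ex_series (fun n => INR (a n) * Cmod q ^ n).

Ltac toC := match goal with |- @eq _ ?x ?y => change (@eq C x y) end; cbv beta.
Ltac toR := match goal with |- @eq _ ?x ?y => change (@eq R x y) end; cbv beta.

Lemma is_series_val {K : AbsRing} {V : NormedModule K} (a : nat -> V) l l' :
  is_series a l -> l = l' -> is_series a l'.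
Proof. intros H <-. exact H. Qed.

Lemma fst_RC (x : R) (z : C) : fst (RtoC x * z)%C = x * fst z.
Proof. simpl. ring. Qed.
Lemma snd_RC (x : R) (z : C) : snd (RtoC x * z)%C = x * snd z.
Proof. simpl. ring. Qed.

Lemma sqrt_cmod q : Cmod q < 1 -> 0 <= sqrt (Cmod q) < 1 /\ forall m, Cmod q ^ m = sqrt (Cmod q) ^ (2 * m).
Proof.
  intros Hq. pose proof (Cmod_ge_0 q). pose proof (pow2_sqrt (Cmod q) H) as E.
  pose proof (sqrt_pos (Cmod q)).
  split; [split; auto; nra|]. intros m. rewrite pow_mult, E. reflexivity.
Qed.

Lemma GF_sparse (g : nat -> nat) (Hg : forall k, (k <= g k)%nat) (q : C) :
  Cmod q < 1 -> GF (cnt g) q (Csum (fun k => q ^ g k)%C).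
Proof.
  intros Hq. destruct (sqrt_cmod q Hq) as [Hs Hp]. set (s := sqrt (Cmod q)) in *.
  split.
  - unfold Csum. apply is_series_C.
    + eapply is_series_ext; [| apply (sparse_R g Hg (fun m => fst (q ^ m)%C) s Hs)].
      * intros n. rewrite fst_RC. reflexivity.
      * intros m. rewrite <- Hp, <- Cmod_pow. apply fst_le_Cmod.
    + eapply is_series_ext; [| apply (sparse_R g Hg (fun m => snd (q ^ m)%C) s Hs)].
      * intros n. rewrite snd_RC. reflexivity.
      * intros m. rewrite <- Hp, <- Cmod_pow. apply snd_le_Cmod.
  - eexists. apply (sparse_R g Hg (fun m => Cmod q ^ m) s Hs).
    intros m. rewrite <- Hp. rewrite Rabs_right; [lra|]. apply Rle_ge, pow_le, Cmod_ge_0.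
Qed.

Lemma GF_plus a b q A B : GF a q A -> GF b q B -> GF (fun n => a n + b n)%nat q (A + B)%C.
Proof.
  intros [HA1 HA2] [HB1 HB2]. split.
  - eapply is_series_ext; [| apply (is_series_plus _ _ _ _ HA1 HB1)].
    intros n. toC. rewrite plus_INR, RtoC_plus. change plus with Cplus. ring.
  - eapply ex_series_ext; [| apply (ex_series_plus _ _ HA2 HB2)].
    intros n. toR. rewrite plus_INR. change plus with Rplus. ring.
Qed.

Lemma GF_scal c a q A : GF a q A -> GF (fun n => c * a n)%nat q (RtoC (INR c) * A)%C.
Proof.
  intros [HA1 HA2]. split.
  - eapply is_series_ext; [| apply (is_series_scal_l (RtoC (INR c)) _ _ HA1)].
    intros n. toC. rewrite mult_INR, RtoC_mult. change scal with Cmult. ring.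
  - eapply ex_series_ext; [| apply (ex_series_scal_l (INR c) _ HA2)].
    intros n. toR. rewrite mult_INR. change scal with Rmult. change mult with Rmult. ring.
Qed.

Lemma GF_shift a q A : GF a q A -> GF (sh a) q (q * A)%C.
Proof.
  intros [HA1 HA2]. split.
  - apply is_series_decr_1.
    eapply is_series_val; [eapply is_series_ext; [| apply (is_series_scal_l q _ _ HA1)] |].
    + intros n. toC. simpl sh. rewrite Cpow_S. change scal with Cmult. ring.
    + toC. simpl sh. change plus with Cplus. change opp with Copp. change scal with Cmult. simpl INR. ring.
  - apply ex_series_incr_1.
    eapply ex_series_ext; [| apply (ex_series_scal_l (Cmod q) _ HA2)].
    intros n. toR. simpl sh. simpl pow. change scal with Rmult. change mult with Rmult. ring.
Qed.

End PB3.
Import PB3.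

Module PB4.
Import ListNotations.

Lemma INR_nsum (f : nat -> nat) n : INR (nsum f (S n)) = sum_f_R0 (fun i => INR (f i)) n.
Proof.
  induction n.
  - simpl. lra.
  - change (nsum f (S (S n))) with (nsum f (S n) + f (S n))%nat.
    rewrite plus_INR, IHn. reflexivity.
Qed.

Lemma INR_conv a b n : INR (conv a b n) = sum_f_R0 (fun k => INR (a k) * INR (b (n - k)%nat)) n.
Proof. unfold conv. rewrite INR_nsum. apply sum_eq. intros. apply mult_INR. Qed.

Lemma abs_fst_bound (k : nat) (q : C) n : Rabs (INR k * fst (q ^ n)%C) <= INR k * Cmod q ^ n.
Proof.
  rewrite Rabs_mult, Rabs_right by (apply Rle_ge, pos_INR).
  apply Rmult_le_compat_l; [apply pos_INR|]. rewrite <- Cmod_pow. apply fst_le_Cmod.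
Qed.
Lemma abs_snd_bound (k : nat) (q : C) n : Rabs (INR k * snd (q ^ n)%C) <= INR k * Cmod q ^ n.
Proof.
  rewrite Rabs_mult, Rabs_right by (apply Rle_ge, pos_INR).
  apply Rmult_le_compat_l; [apply pos_INR|]. rewrite <- Cmod_pow. apply snd_le_Cmod.
Qed.

Lemma ex_abs_comp (a : nat -> nat) (q : C) (f : nat -> R) :
  ex_series (fun n => INR (a n) * Cmod q ^ n) ->
  (forall n, Rabs (f n) <= INR (a n) * Cmod q ^ n) ->
  ex_series (fun n => Rabs (f n)).
Proof.
  intros H Hb. refine (@ex_series_le R_AbsRing R_CompleteNormedModule _ _ _ H).
  intros n. change (norm (Rabs (f n))) with (Rabs (Rabs (f n))). rewrite Rabs_Rabsolu. apply Hb.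
Qed.

Lemma qpow_split (q : C) n k : (k <= n)%nat -> (q ^ n = q ^ k * q ^ (n - k))%C.
Proof. intros H. rewrite <- Cpow_add_r. f_equal. lia. Qed.

Lemma GF_mul a b q A B : GF a q A -> GF b q B -> GF (conv a b) q (A * B)%C.
Proof.
  intros [HA1 HA2] [HB1 HB2].
  set (fa := fun n => INR (a n) * fst (q ^ n)%C).
  set (sa := fun n => INR (a n) * snd (q ^ n)%C).
  set (fb := fun n => INR (b n) * fst (q ^ n)%C).
  set (sb := fun n => INR (b n) * snd (q ^ n)%C).
  assert (Hfa : is_series fa (fst A)).
  { eapply is_series_ext; [| apply (is_series_C_fst _ _ HA1)]. intros n. toR. apply fst_RC. }
  assert (Hsa : is_series sa (snd A)).
  { eapply is_series_ext; [| apply (is_series_C_snd _ _ HA1)]. intros n. toR. apply snd_RC. }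
  assert (Hfb : is_series fb (fst B)).
  { eapply is_series_ext; [| apply (is_series_C_fst _ _ HB1)]. intros n. toR. apply fst_RC. }
  assert (Hsb : is_series sb (snd B)).
  { eapply is_series_ext; [| apply (is_series_C_snd _ _ HB1)]. intros n. toR. apply snd_RC. }
  assert (Afa : ex_series (fun n => Rabs (fa n))) by (apply (ex_abs_comp a q); auto; intros; apply abs_fst_bound).
  assert (Asa : ex_series (fun n => Rabs (sa n))) by (apply (ex_abs_comp a q); auto; intros; apply abs_snd_bound).
  assert (Afb : ex_series (fun n => Rabs (fb n))) by (apply (ex_abs_comp b q); auto; intros; apply abs_fst_bound).
  assert (Asb : ex_series (fun n => Rabs (sb n))) by (apply (ex_abs_comp b q); auto; intros; apply abs_snd_bound).
  pose proof (is_series_mult fa fb _ _ Hfa Hfb Afa Afb) as M1.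
  pose proof (is_series_mult sa sb _ _ Hsa Hsb Asa Asb) as M2.
  pose proof (is_series_mult fa sb _ _ Hfa Hsb Afa Asb) as M3.
  pose proof (is_series_mult sa fb _ _ Hsa Hfb Asa Afb) as M4.
  split.
  - replace (A * B)%C with (fst A * fst B - snd A * snd B, fst A * snd B + snd A * fst B) by reflexivity.
    apply is_series_C.
    + eapply is_series_val; [eapply is_series_ext; [| apply (is_series_minus _ _ _ _ M1 M2)] |].
      * intros n. toR. change plus with Rplus. change opp with Ropp.
        rewrite fst_RC, INR_conv, Rmult_comm, scal_sum, <- Rminus_def, <- minus_sum.
        apply sum_eq. intros k Hk. unfold fa, fb, sa, sb. rewrite (qpow_split q n k Hk). simpl. ring.
      * toR. change plus with Rplus. change opp with Ropp. ring.
    + eapply is_series_val; [eapply is_series_ext; [| apply (is_series_plus _ _ _ _ M3 M4)] |].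
      * intros n. toR. change plus with Rplus.
        rewrite snd_RC, INR_conv, Rmult_comm, scal_sum, <- sum_plus.
        apply sum_eq. intros k Hk. unfold fa, fb, sa, sb. rewrite (qpow_split q n k Hk). simpl. ring.
      * toR. change plus with Rplus. ring.
  - destruct HA2 as [la Ha]. destruct HB2 as [lb Hb].
    eexists. eapply is_series_ext; [| apply (is_series_mult_pos _ _ _ _ Ha Hb)].
    + intros n. toR. rewrite INR_conv, Rmult_comm, scal_sum. apply sum_eq. intros k Hk.
      replace (Cmod q ^ n) with (Cmod q ^ k * Cmod q ^ (n - k)%nat) by (rewrite <- pow_add; f_equal; lia).
      ring.
    + intros n. apply Rmult_le_pos; [apply pos_INR | apply pow_le, Cmod_ge_0].
    + intros n. apply Rmult_le_pos; [apply pos_INR | apply pow_le, Cmod_ge_0].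
Qed.

End PB4.
Import PB4.


Lemma Csum_ext (a b : nat -> C) : (forall n, a n = b n) -> Csum a = Csum b.
Proof.
  intros H. unfold Csum. f_equal; apply Series_ext; intros n; rewrite H; reflexivity.
Qed.

Lemma tri_ge k : (k <= k * (k + 1) / 2)%nat.
Proof.
  apply Nat.div_le_lower_bound; [lia|]. destruct k; nia.
Qed.

Lemma psi_GF e q : (1 <= e)%nat -> Cmod q < 1 -> GF (cnt_tr e) q (psi (q ^ e)%C).
Proof.
  intros He Hq. unfold psi.
  rewrite (Csum_ext _ (fun k => q ^ (e * (k * (k + 1) / 2)))%C) by (intros; rewrite <- Cpow_mult_r; reflexivity).
  apply GF_sparse; auto. intros k. pose proof (tri_ge k). nia.
Qed.

Lemma phi_GF e q : (1 <= e)%nat -> Cmod q < 1 -> GF (cnt_sq e) q (phi (q ^ e)%C).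
Proof.
  intros He Hq. unfold phi.
  rewrite (Csum_ext _ (fun k => q ^ (e * (k * k)))%C) by (intros; rewrite <- Cpow_mult_r; reflexivity).
  rewrite (Csum_ext (fun m => (q ^ e) ^ ((m + 1) * (m + 1)))%C (fun k => q ^ (e * ((k + 1) * (k + 1))))%C)
    by (intros; rewrite <- Cpow_mult_r; reflexivity).
  apply GF_plus; apply GF_sparse; auto; intros k; nia.
Qed.

Theorem lemma6p3 (b : nat) (hb : (1 <= b)%nat) :
  (forall n : nat, (1 <= n)%nat -> t 3 5 (4 * b) (4 * n + 3) = t 3 5 b n) /\
  (forall q : C, (Cmod q < 1)%R ->
     @is_series C_AbsRing C_NormedModule
       (fun n : nat => (RtoC (INR (t 3 5 (4 * b) (4 * n + 5))) * q ^ n)%C)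
       (8 * psi (q ^ b) *
          (phi (q ^ 10) * psi (q ^ 12) + q * phi (q ^ 6) * psi (q ^ 20)))%C).
Proof.
  split.
  - intros n _. apply comb1; auto.
  - intros q Hq.
    pose proof (GF_scal 8 _ _ _ (GF_mul _ _ _ _ _ (psi_GF b q hb Hq)
       (GF_plus _ _ _ _ _ (GF_mul _ _ _ _ _ (phi_GF 10 q ltac:(lia) Hq) (psi_GF 12 q ltac:(lia) Hq))
                          (GF_shift _ _ _ (GF_mul _ _ _ _ _ (phi_GF 6 q ltac:(lia) Hq) (psi_GF 20 q ltac:(lia) Hq))))))
      as [H _].
    eapply is_series_val; [eapply is_series_ext; [| exact H] |].
    + intros n. toC. rewrite comb2 by auto. reflexivity.
    + toC. replace (INR 8) with 8%R by (simpl; ring). ring.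
Qed.
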